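(* Let $\sigma$ be any function from atoms to atoms. Then for every context $\Gamma$ and formula $A$, the sequent $\Gamma\vdash A$ is derivable if and only if $\mathrm{fr}(\Gamma)=\mathrm{fr}(A)$ and the sequent $\sigma\Gamma\vdash\sigma A$ is derivable.
   Context: Formulas are built from atoms ($p,q,\dots$) by a binary product: every formula is an atom or $A\bullet B$. A context is a finite (possibly empty) list of formulas; commas denote concatenation. The sequent calculus has exactly four rules (no weakening, contraction or exchange): ($\bullet L$) from $A,B,\Delta\vdash C$ infer $A\bullet B,\Delta\vdash C$ (the product must be leftmost); ($\bullet R$) from $\Gamma\vdash A$ and $\Delta\vdash B$ infer $\Gamma,\Delta\vdash A\bullet B$; ($id$) $A\vdash A$; ($cut$) from $\Theta\vdash A$ and $\Gamma,A,\Delta\vdash B$ infer $\Gamma,\Theta,\Delta\vdash B$; derivable means conclusion of a finite derivation tree with no undischarged premises. The frontier is the ordered list of atom occurrences: $\mathrm{fr}(p)=p$, $\mathrm{fr}(A\bullet B)=\mathrm{fr}(A),\mathrm{fr}(B)$, and the frontier of a context is the concatenation of the frontiers of its formulas. $\sigma A$, $\sigma\Gamma$ denote the result of replacing each atom $p$ by $\sigma(p)$. *)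

(* Defs.v *)
From Stdlib Require Import List.
Import ListNotations.
Set Implicit Arguments.

Inductive formula (atom : Type) : Type :=
| Atom : atom -> formula atom
| Prod : formula atom -> formula atom -> formula atom.
Arguments Atom {atom} _.
Arguments Prod {atom} _ _.

(* A context is a finite list of formulas; commas = concatenation (++). *)
Definition context (atom : Type) := list (formula atom).

Inductive derivable {atom : Type} : context atom -> formula atom -> Prop :=
| der_prodL : forall (A B C : formula atom) (Delta : context atom),
    derivable (A :: B :: Delta) C -> derivable (Prod A B :: Delta) C
| der_prodR : forall (Gamma Delta : context atom) (A B : formula atom),
    derivable Gamma A -> derivable Delta B -> derivable (Gamma ++ Delta) (Prod A B)
| der_id : forall A : formula atom, derivable [A] A
| der_cut : forall (Theta Gamma Delta : context atom) (A B : formula atom),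
    derivable Theta A -> derivable (Gamma ++ A :: Delta) B ->
    derivable (Gamma ++ Theta ++ Delta) B.

Fixpoint fr {atom : Type} (A : formula atom) : list atom :=
  match A with
  | Atom p => [p]
  | Prod A B => fr A ++ fr B
  end.

Definition fr_ctx {atom : Type} (Gamma : context atom) : list atom :=
  flat_map fr Gamma.

Fixpoint subst {atom : Type} (sigma : atom -> atom) (A : formula atom) : formula atom :=
  match A with
  | Atom p => Atom (sigma p)
  | Prod A B => Prod (subst sigma A) (subst sigma B)
  end.

Definition subst_ctx {atom : Type} (sigma : atom -> atom) (Gamma : context atom)
  : context atom := map (subst sigma) Gamma.

(* Main.v *)
Require Import Defs.
From Stdlib Require Import List.
Import ListNotations.

Section S.
Context {atom : Type}.

Inductive cf : context atom -> formula atom -> Prop :=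
| cf_prodL : forall (A B C : formula atom) (Delta : context atom),
    cf (A :: B :: Delta) C -> cf (Prod A B :: Delta) C
| cf_prodR : forall (Gamma Delta : context atom) (A B : formula atom),
    cf Gamma A -> cf Delta B -> cf (Gamma ++ Delta) (Prod A B)
| cf_id : forall A : formula atom, cf [A] A.

Lemma fr_ctx_app (G D : context atom) : fr_ctx (G ++ D) = fr_ctx G ++ fr_ctx D.
Proof. unfold fr_ctx. apply flat_map_app. Qed.

Lemma cut_adm (X : formula atom) : forall Theta, cf Theta X ->
  forall Gamma Delta B, cf (Gamma ++ X :: Delta) B -> cf (Gamma ++ Theta ++ Delta) B.
Proof.
  induction X as [p | X1 IH1 X2 IH2].
  - intros Theta HT Gamma Delta B HR.
    remember (Gamma ++ Atom p :: Delta) as L eqn:EL.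
    revert Gamma Delta EL.
    induction HR as [A B' C D' H IH | G' D' A' B' H1 IHa H2 IHb | A]; intros Gamma Delta EL.
    + destruct Gamma as [|g Gamma]; simpl in EL; inversion EL; subst.
      specialize (IH (A :: B' :: Gamma) Delta eq_refl). simpl in *. now constructor.
    + apply app_eq_app in EL as [l [[E1 E2] | [E1 E2]]]; subst.
      * destruct l as [|x l].
        -- simpl in E2. subst D'. rewrite app_nil_r in *.
           specialize (IHb [] Delta eq_refl). simpl in IHb. now constructor.
        -- simpl in E2. inversion E2; subst.
           specialize (IHa Gamma l eq_refl). rewrite (app_assoc Theta), (app_assoc Gamma).
           now constructor.
      * specialize (IHb l Delta eq_refl). rewrite <- app_assoc. now constructor.
    + destruct Gamma as [|g [|]]; simpl in EL; inversion EL; subst.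
      * simpl. now rewrite app_nil_r.
      all: try (destruct Gamma; discriminate).
  -
    assert (Hp : forall Theta, cf Theta (Prod X1 X2) -> forall Delta B,
               cf (X1 :: X2 :: Delta) B -> cf (Theta ++ Delta) B).
    { intros Theta HT. remember (Prod X1 X2) as Y eqn:EY. revert EY.
      induction HT as [A B' C D' H IH | G' D' A' B' H1 _ H2 _ | A]; intros EY Delta B HR.
      - simpl. constructor. apply (IH EY Delta B HR).
      - inversion EY; subst.
        pose proof (IH1 G' H1 [] (X2 :: Delta) B HR) as H3. simpl in H3.
        pose proof (IH2 D' H2 G' Delta B H3). now rewrite <- app_assoc.
      - subst. simpl. now constructor. }
    intros Theta HT Gamma Delta B HR.
    remember (Gamma ++ Prod X1 X2 :: Delta) as L eqn:EL.
    revert Gamma Delta EL.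
    induction HR as [A B' C D' H IH | G' D' A' B' H1 IHa H2 IHb | A]; intros Gamma Delta EL.
    + destruct Gamma as [|g Gamma]; simpl in EL; inversion EL; subst.
      * simpl. apply Hp; auto.
      * specialize (IH (A :: B' :: Gamma) Delta eq_refl). simpl in *. now constructor.
    + apply app_eq_app in EL as [l [[E1 E2] | [E1 E2]]]; subst.
      * destruct l as [|x l].
        -- simpl in E2. subst D'. rewrite app_nil_r in *.
           specialize (IHb [] Delta eq_refl). simpl in IHb. now constructor.
        -- simpl in E2. inversion E2; subst.
           specialize (IHa Gamma l eq_refl). rewrite (app_assoc Theta), (app_assoc Gamma).
           now constructor.
      * specialize (IHb l Delta eq_refl). rewrite <- app_assoc. now constructor.
    + destruct Gamma as [|g [|]]; simpl in EL; inversion EL; subst.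
      * simpl. now rewrite app_nil_r.
      all: try (destruct Gamma; discriminate).
Qed.

Lemma der_cf (G : context atom) (A : formula atom) : derivable G A -> cf G A.
Proof.
  induction 1.
  - now constructor.
  - now constructor.
  - constructor.
  - eapply cut_adm; eauto.
Qed.

Lemma cf_der (G : context atom) (A : formula atom) : cf G A -> derivable G A.
Proof. induction 1; now constructor. Qed.

Lemma der_fr (G : context atom) (A : formula atom) : derivable G A -> fr_ctx G = fr A.
Proof.
  induction 1; simpl.
  - unfold fr_ctx in *. simpl in *. rewrite <- app_assoc. exact IHderivable.
  - rewrite fr_ctx_app. congruence.
  - apply app_nil_r.
  - rewrite !fr_ctx_app in *. simpl in *. rewrite IHderivable1. exact IHderivable2.
Qed.

Lemma cf_fr (G : context atom) (A : formula atom) : cf G A -> fr_ctx G = fr A.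
Proof. intro H. apply der_fr, cf_der, H. Qed.

Lemma der_subst (sigma : atom -> atom) (G : context atom) (A : formula atom) : derivable G A -> derivable (subst_ctx sigma G) (subst sigma A).
Proof.
  unfold subst_ctx. induction 1; simpl in *.
  - now constructor.
  - rewrite map_app. now constructor.
  - constructor.
  - rewrite map_app in *. simpl in *. rewrite map_app. eapply der_cut; eauto.
Qed.

Lemma fr_subst (sigma : atom -> atom) (A : formula atom) : fr (subst sigma A) = map sigma (fr A).
Proof. induction A; simpl; auto. rewrite map_app. congruence. Qed.

Lemma fr_ctx_subst (sigma : atom -> atom) (G : context atom) : fr_ctx (subst_ctx sigma G) = map sigma (fr_ctx G).
Proof.
  induction G; simpl; auto. unfold fr_ctx, subst_ctx in *. simpl.
  rewrite map_app, fr_subst. congruence.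
Qed.

Lemma app_len_inj {T : Type} (a b c d : list T) :
  length a = length c -> a ++ b = c ++ d -> a = c /\ b = d.
Proof.
  revert c; induction a as [|x a IH]; intros [|y c] L E; simpl in *; try discriminate; auto.
  inversion E; subst. destruct (IH c ltac:(congruence) H1). subst; auto.
Qed.

Lemma subst_inj (sigma : atom -> atom) (X : formula atom) : forall Y, subst sigma X = subst sigma Y -> fr X = fr Y -> X = Y.
Proof.
  induction X as [x | X1 IH1 X2 IH2]; intros [y | Y1 Y2] E F; simpl in *; try discriminate.
  - now inversion F.
  - inversion E as [[E1 E2]].
    assert (L : length (fr X1) = length (fr Y1)).
    { rewrite <- (length_map sigma (fr X1)), <- (length_map sigma (fr Y1)).
      rewrite <- !fr_subst. congruence. }
    destruct (app_len_inj _ _ _ _ L F) as [F1 F2].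
    f_equal; auto.
Qed.

Lemma cf_lift (sigma : atom -> atom) : forall G' A', cf G' A' -> forall G A,
  subst_ctx sigma G = G' -> subst sigma A = A' -> fr_ctx G = fr A -> cf G A.
Proof.
  unfold subst_ctx.
  induction 1 as [A1 B1 C1 D1 H IH | G1 D1 A1 B1 H1 IHa H2 IHb | A1]; intros G A EG EA F.
  - destruct G as [|g G]; simpl in EG; inversion EG.
    destruct g as [|g1 g2]; simpl in *; inversion H1; subst.
    constructor. apply IH; auto. unfold fr_ctx in *. simpl in *. now rewrite <- app_assoc in F.
  - apply map_eq_app in EG as [Ga [Gb [E [Ea Eb]]]]. subst.
    destruct A as [a|Aa Ab]; simpl in EA; inversion EA; subst.
    pose proof (cf_fr _ _ H1) as F1. fold (subst_ctx sigma Ga) in F1.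
    rewrite fr_ctx_app in F. simpl in F.
    assert (L : length (fr_ctx Ga) = length (fr Aa)).
    { rewrite <- (length_map sigma (fr_ctx Ga)), <- (length_map sigma (fr Aa)).
      rewrite <- fr_subst. rewrite <- F1. now rewrite <- fr_ctx_subst. }
    destruct (app_len_inj _ _ _ _ L F). constructor; auto.
  - destruct G as [|g [|]]; simpl in EG; inversion EG; subst.
    assert (g = A). { apply subst_inj with sigma; auto. unfold fr_ctx in F; simpl in F.
      now rewrite app_nil_r in F. }
    subst. constructor.
Qed.
End S.

Theorem proposition1p16 (atom : Type) (sigma : atom -> atom)
  (Gamma : context atom) (A : formula atom) :
  derivable Gamma A <->
  (fr_ctx Gamma = fr A /\ derivable (subst_ctx sigma Gamma) (subst sigma A)).
Proof.
  split.
  - intro H. split; [apply der_fr, H | apply der_subst, H].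
  - intros [F H]. apply cf_der. eapply cf_lift; eauto. apply der_cf, H.
Qed.
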